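(* Let $\beta\in(0,1)$, let $U_1\ge U_2\ge\dots\ge U_K$ be real numbers in $[0,1]$, and let $L\in\mathbb N$ be even. For a sequence $\mathbf A=(A_0,\dots,A_{L-1})\in[K]^L$ let $V(\mathbf A)=\sum_{s=0}^{L-1}\beta^sU_{A_s}$, and for a permutation $\sigma$ of $\{0,\dots,L-1\}$ let $V(\sigma,\mathbf A)=\sum_{s=0}^{L-1}\beta^sU_{A_{\sigma(s)}}$ (the value of the reordered sequence). Then for every $\mathbf A\in[K]^L$, $$\max_{\sigma}V(\sigma,\mathbf A)\le V(\mathbf A)+\frac{(1-\beta^L)^2}{1-\beta},$$ the maximum being over all permutations (reorderings) of $\mathbf A$.
   Context: In the paper, $U_k=u^i(a^i_k,w^{-i})$ is the expected stage utility of action $a^i_k$ of player $i$ against a fixed opponents' mixed profile, with utilities valued in $[0,1]$ and actions indexed so that $U_1\ge\dots\ge U_K$. *)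

(* Defs.v *)
From mathcomp Require Import all_boot all_order all_algebra all_fingroup.
Set Implicit Arguments. Unset Strict Implicit. Unset Printing Implicit Defensive.
Import Order.TTheory GRing.Theory Num.Theory.
Local Open Scope ring_scope.

(* V(A) = sum_{s<L} beta^s U_{A_s}; actions [K] are indexed by 'I_K (0-based). *)
Definition Vseq (R : realFieldType) (K L : nat) (beta : R) (U : 'I_K -> R)
  (A : 'I_L -> 'I_K) : R :=
  \sum_(s < L) beta ^+ s * U (A s).

Definition Vperm (R : realFieldType) (K L : nat) (beta : R) (U : 'I_K -> R)
  (sigma : 'S_L) (A : 'I_L -> 'I_K) : R :=
  \sum_(s < L) beta ^+ s * U (A (sigma s)).

(* Main.v *)
Require Import Defs.
From mathcomp Require Import all_boot all_order all_algebra all_fingroup.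
From mathcomp Require Import ring.
Import Order.TTheory GRing.Theory Num.Theory.
Local Open Scope ring_scope.

Lemma geom_sum (R : realFieldType) (b : R) (n : nat) :
  (\sum_(s < n) b ^+ s) * (1 - b) = 1 - b ^+ n.
Proof.
elim: n => [|n IH]; first by rewrite big_ord0 mul0r expr0 subrr.
rewrite big_ord_recr /= mulrDl IH exprS; ring.
Qed.

Lemma sum_le_n (R : realFieldType) (b : R) (n : nat) :
  0 <= b <= 1 -> \sum_(s < n) b ^+ s <= n%:R.
Proof.
move=> /andP[b0 b1].
rewrite -[n in n%:R]card_ord -sumr_const.
apply: ler_sum => i _; exact: exprn_ile1.
Qed.

Theorem mainTheorem12 (R : realFieldType) (K L : nat) (beta : R) (U : 'I_K -> R)
  (hbeta : 0 < beta < 1)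
  (hU01 : forall k, 0 <= U k <= 1)
  (hUmono : forall i j : 'I_K, (i <= j)%N -> U j <= U i)
  (hL : ~~ odd L)
  (A : 'I_L -> 'I_K) :
  \big[Order.max/Vseq beta U A]_(sigma : 'S_L) Vperm beta U sigma A
    <= Vseq beta U A + (1 - beta ^+ L) ^+ 2 / (1 - beta).
Proof.
case/andP: hbeta => b0 b1.
set c := beta ^+ L.
set S := \sum_(s < L) beta ^+ s.
have c0 : 0 <= c by rewrite exprn_ge0 // ltW.
have c1 : c <= 1 by rewrite exprn_ile1 // ltW.
have hS : S * (1 - beta) = 1 - c by exact: geom_sum.
have hSL : S <= L%:R by apply: sum_le_n; rewrite ltW // ltW.
have b1' : 0 < 1 - beta by rewrite subr_gt0.
have key : (1 - c) ^+ 2 / (1 - beta) = (1 - c) * S.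
  by rewrite -hS expr2 mulrA mulfK // gt_eqF.
rewrite key.
have pos : 0 <= (1 - c) * S.
  by rewrite mulr_ge0 // ?subr_ge0 // sumr_ge0 // => i _; rewrite exprn_ge0 // ltW.
apply: (big_ind (fun z => z <= Vseq beta U A + (1 - c) * S)).
- by rewrite lerDl.
- by move=> x y hx hy; rewrite ge_max hx hy.
move=> sigma _.
rewrite -subr_ge0.
set x := fun s : 'I_L => U (A s).
have hperm : \sum_(s < L) x (sigma s) = \sum_(s < L) x s.
  by rewrite [RHS](reindex_inj (@perm_inj _ sigma)).
have eq1 : Vperm beta U sigma A - Vseq beta U A =
   \sum_(s < L) (beta ^+ s - c) * (x (sigma s) - x s).
  rewrite /Vperm /Vseq -sumrB.
  have -> : \sum_(s < L) (beta ^+ s - c) * (x (sigma s) - x s) =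
     \sum_(s < L) (beta ^+ s * U (A (sigma s)) - beta ^+ s * U (A s))
     - c * (\sum_(s < L) x (sigma s) - \sum_(s < L) x s).
    rewrite mulrBr !mulr_sumr -!sumrB; apply: eq_bigr => i _; rewrite /x; ring.
  by rewrite hperm subrr mulr0 subr0.
have eq2 : \sum_(s < L) (beta ^+ s - c) * (x (sigma s) - x s)
     <= \sum_(s < L) (beta ^+ s - c).
  apply: ler_sum => i _.
  have h1 : 0 <= beta ^+ i - c.
    rewrite subr_ge0 /c; apply: (ler_wiXn2l (ltW b0) (ltW b1)); exact: ltnW (ltn_ord i).
  have : x (sigma i) - x i <= 1.
    have := hU01 (A (sigma i)); have := hU01 (A i); rewrite /x.
    case/andP=> a0 _ /andP[_ a1]; rewrite lerBlDr; apply: (le_trans a1); rewrite lerDl.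
    exact: a0.
  move=> h2; rewrite -[X in _ <= X]mulr1; exact: ler_wpM2l.
have eq3 : \sum_(s < L) (beta ^+ s - c) = S - L%:R * c.
  by rewrite sumrB sumr_const card_ord mulr_natl.
have : Vperm beta U sigma A - Vseq beta U A <= S - L%:R * c.
  by rewrite eq1 -eq3.
have : S * c <= L%:R * c by rewrite ler_wpM2r.
move=> h1 h2.
rewrite subr_ge0 -lerBlDl.
apply: (le_trans h2).
by rewrite mulrBl mul1r lerD2l lerN2 mulrC.
Qed.
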